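(* Let $m\ge1$, $\Sigma=\{1,\ldots,m\}$, and let $\mu:\Sigma^*\to\Sigma^*$ be a morphism with $\mu(1)=1x$ for some $x\in\Sigma^+$, $|\mu(a)|>1$ for all $a\in\Sigma$, and frequency matrix $M$ non-singular with $|M^{-1}|<1$. Let $k$ be a positive integer and let $T_k=[\epsilon,\ldots,\epsilon,\vec 0,\ldots,\vec 0]$ be the $k$-template with $a_1=\cdots=a_{k+1}=\epsilon$ and $d_1=\cdots=d_{k-1}=\vec 0$. Then $T_k$ has only finitely many ancestors.
   Context: The Parikh map $\psi:\Sigma^*\to\mathbb{Z}^m$ is $\psi(w)=[|w|_1,\ldots,|w|_m]$ (row vector). The frequency matrix $M$ of $\mu$ has $M_{i,j}=|\mu(i)|_j$. For a real matrix $A$, $|A|=\sup_{v\neq0}|vA|/|v|$ with Euclidean norm on row vectors. A $k$-template is a $2k$-tuple $t=[a_1,\ldots,a_{k+1},d_1,\ldots,d_{k-1}]$ with each $a_i\in\{\epsilon,1,\ldots,m\}$ ($\epsilon$ the empty word) and each $d_i\in\mathbb{Z}^m$. Given $k$-templates $t_1=[a_1,\ldots,a_{k+1},d_1,\ldots,d_{k-1}]$ and $t_2=[A_1,\ldots,A_{k+1},D_1,\ldots,D_{k-1}]$, $t_2$ is a parent of $t_1$ if there are words $a_i',a_i''$ ($1\le i\le k+1$) with $\mu(A_i)=a_i'a_ia_i''$ for each $i$ and $\psi(a_{i+1}''a_{i+2}')-\psi(a_i''a_{i+1}')+D_iM=d_i$ for $1\le i\le k-1$. The ancestor relation is the transitive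 closure of the parent relation. *)

(* Defs.v *)
From HB Require Import structures.
From mathcomp Require Import all_boot all_order all_algebra.
From mathcomp Require Import boolp classical_sets reals Rstruct.
From Stdlib Require Rdefinitions.
Notation R := Rdefinitions.R.
Set Implicit Arguments. Unset Strict Implicit. Unset Printing Implicit Defensive.
Import Order.TTheory GRing.Theory Num.Theory.
Local Open Scope ring_scope.

(* Alphabet Sigma = {1..m} is 'I_m (letter i+1 of the paper is ordinal i).
   Words are seq 'I_m.  A morphism is given by its images of letters. *)
Definition word (m : nat) := seq 'I_m.

Definition mu_word m (mu : 'I_m -> word m) (w : word m) : word m :=
  flatten (map mu w).

Definition parikh m (w : word m) : 'rV[int]_m := \row_j (count_mem j w)%:Z.

Definition freq_mx m (mu : 'I_m -> word m) : 'M[int]_m :=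
  \matrix_(i, j) (count_mem j (mu i))%:Z.

Definition enorm m (v : 'rV[R]_m) : R := Num.sqrt (\sum_j v 0 j ^+ 2).

Definition opnorm m (A : 'M[R]_m) : R :=
  sup ((fun v : 'rV[R]_m => enorm (v *m A) / enorm v) @` [set v | v != 0])%classic.

(* epsilon is None, a letter c is Some c *)
Definition letter m (a : option 'I_m) : word m :=
  if a is Some c then [:: c] else [::].

(* a k-template [a_1..a_{k+1}, d_1..d_{k-1}] (indices shifted to start at 0) *)
Definition template m k :=
  ((k.+1).-tuple (option 'I_m) * (k.-1).-tuple 'rV[int]_m)%type.

(* t2 = (A, D) is a parent of t1 = (a, d) *)
Definition parent m (mu : 'I_m -> word m) k (t2 t1 : template m k) : Prop :=
  let: (A, D) := t2 in
  let: (a, d) := t1 in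
  exists a' a'' : nat -> word m,
    (forall i, (i < k.+1)%N ->
       mu_word mu (letter (nth None A i)) = a' i ++ letter (nth None a i) ++ a'' i)
    /\ (forall i, (i < k.-1)%N ->
       parikh (a'' i.+1 ++ a' i.+2) - parikh (a'' i ++ a' i.+1)
         + nth 0 D i *m freq_mx mu = nth 0 d i).

Definition ancestor m (mu : 'I_m -> word m) k : template m k -> template m k -> Prop :=
  Relation_Operators.clos_trans _ (parent mu (k:=k)).

Definition Tk m k : template m k :=
  ([tuple None | _ < k.+1], [tuple 0 | _ < k.-1]).

(* Main.v *)
Require Import Defs.
From HB Require Import structures.
From mathcomp Require Import all_boot all_order all_algebra.
From mathcomp Require Import boolp classical_sets reals Rstruct.
From mathcomp Require Import zify ring lra.
Import Order.TTheory GRing.Theory Num.Theory.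
Local Open Scope ring_scope.
Set Implicit Arguments. Unset Strict Implicit. Unset Printing Implicit Defensive.

Definition nsq m (v : 'rV[R]_m) : R := \sum_j v 0 j ^+ 2.

Lemma ns_ge0 m (v : 'rV[R]_m) : 0 <= nsq v.
Proof. by apply: sumr_ge0 => j _; apply: sqr_ge0. Qed.

Lemma enorm_sq m (v : 'rV[R]_m) : enorm v ^+ 2 = nsq v.
Proof. by rewrite /enorm sqr_sqrtr // ns_ge0. Qed.

Lemma enorm_ge0 m (v : 'rV[R]_m) : 0 <= enorm v.
Proof. exact: sqrtr_ge0. Qed.

Lemma coord_le m (v : 'rV[R]_m) i : v 0 i ^+ 2 <= nsq v.
Proof.
rewrite /nsq (bigD1 i) //= lerDl.
by apply: sumr_ge0 => j _; apply: sqr_ge0.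
Qed.

Lemma abs_coord_le m (v : 'rV[R]_m) i : `|v 0 i| <= enorm v.
Proof. by rewrite -sqrtr_sqr /enorm ler_sqrt ?ns_ge0 // coord_le. Qed.

Lemma sq_le (x y : R) : `|x| <= y -> x ^+ 2 <= y ^+ 2.
Proof.
move=> h; have y0 : 0 <= y by apply: le_trans h.
rewrite -[x ^+ 2]real_normK ?num_real //.
by rewrite !expr2 ler_pM.
Qed.

Lemma mx_bound m (A : 'M[R]_m) : exists K, 0 <= K /\ forall v, nsq (v *m A) <= K * nsq v.
Proof.
exists (\sum_j (\sum_i `|A i j|) ^+ 2); split.
  by apply: sumr_ge0 => j _; apply: sqr_ge0.
move=> v; rewrite /nsq mulr_suml; apply: ler_sum => j _.
rewrite mulrC; have -> : \sum_j v 0 j ^+ 2 = enorm v ^+ 2 by rewrite enorm_sq.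
rewrite -exprMn; apply: sq_le.
rewrite mxE mulr_sumr; apply: le_trans (ler_norm_sum _ _ _) _.
apply: ler_sum => i _; rewrite normrM; apply: ler_wpM2r => //.
exact: abs_coord_le.
Qed.

Lemma ns0 m (v : 'rV[R]_m) : nsq v = 0 -> v = 0.
Proof.
move=> h; apply/rowP => j; rewrite mxE.
have /eqP : v 0 j ^+ 2 = 0.
  move: h; rewrite /nsq => h.
  have := @psumr_eq0P _ _ xpredT (fun j => v 0 j ^+ 2) (fun j _ => sqr_ge0 _) h.
  by apply.
by rewrite sqrf_eq0 => /eqP ->.
Qed.

Lemma opnorm_ub m (A : 'M[R]_m) v : enorm (v *m A) <= opnorm A * enorm v.
Proof.
have [->|v0] := eqVneq v 0.
  rewrite mul0mx /enorm /nsq big1 ?sqrtr0 ?mulr0 // => j _.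
  by rewrite mxE expr0n.
have nv : 0 < enorm v.
  rewrite lt_def enorm_ge0 andbT /enorm sqrtr_eq0 -ltNge lt_def ns_ge0 andbT.
  by apply/eqP => /ns0 h; rewrite h eqxx in v0.
rewrite -ler_pdivrMr //.
have [K [K0 hK]] := mx_bound A.
apply: ub_le_sup; last by exists v.
exists (Num.sqrt K) => _ [w /= w0 <-].
have nw : 0 < enorm w.
  rewrite lt_def enorm_ge0 andbT /enorm sqrtr_eq0 -ltNge lt_def ns_ge0 andbT.
  by apply/eqP => /ns0 h; rewrite h eqxx in w0.
rewrite ler_pdivrMr // /enorm -sqrtrM // ler_sqrt ?hK //.
by apply: mulr_ge0 => //; apply: ns_ge0.
Qed.
Lemma fin_bounded m k (N : nat) : exists s : seq (template m k),
  forall t : template m k,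
  (forall i, (i < k.-1)%N -> forall j, (absz ((nth 0 t.2 i) 0 j)%R <= N)%N) -> t \in s.
Proof.
pose g (v : 'rV['I_(N+N).+1]_m) : 'rV[int]_m := \row_j ((v 0 j : nat)%:Z - N%:Z).
pose h (v : 'rV[int]_m) : 'rV['I_(N+N).+1]_m := \row_j inord (absz (v 0 j + N%:Z)%R).
pose T := ((k.+1).-tuple (option 'I_m) * (k.-1).-tuple 'rV['I_(N+N).+1]_m)%type.
pose f (x : T) : template m k := (x.1, map_tuple g x.2).
exists (map f (enum {: (k.+1).-tuple (option 'I_m) * (k.-1).-tuple 'rV['I_(N+N).+1]_m})) => -[a D] /= hD.
have -> : D = map_tuple g (map_tuple h D).
  apply: eq_from_tnth => i; rewrite !tnth_map; apply/rowP => j.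
  have := hD i (ltn_ord i) j; rewrite -tnth_nth => hb.
  rewrite !mxE inordK; lia.
by rewrite (map_f f (mem_enum _ (a, map_tuple h D))).
Qed.

Lemma step_ineq (p q a b : R) : 0 < p -> p * q = 1 ->
  (a - b)^+2 <= (1+p) * a^+2 + (1+q) * b^+2.
Proof.
move=> hp hpq. rewrite -subr_ge0.
have e : p * ((1+p) * a^+2 + (1+q) * b^+2 - (a - b)^+2) = (p*a+b)^+2 + (p*q - 1)*b^+2 by ring.
move: e; rewrite hpq subrr mul0r addr0 => e.
by rewrite -(pmulr_rge0 _ hp) e sqr_ge0.
Qed.

Lemma nsq_sub m (u v : 'rV[R]_m) p q : 0 < p -> p * q = 1 ->
  nsq (u - v) <= (1+p) * nsq u + (1+q) * nsq v.
Proof.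
move=> hp hpq; rewrite /nsq !mulr_sumr -big_split /=; apply: ler_sum => j _.
rewrite !mxE; exact: step_ineq.
Qed.

Lemma contract m (A : 'M[R]_m) r : opnorm A <= r -> 0 <= r ->
  forall w, nsq (w *m A) <= r ^+ 2 * nsq w.
Proof.
move=> hr r0 w; rewrite -!enorm_sq -exprMn; apply: sq_le.
rewrite ger0_norm ?enorm_ge0 //; apply: le_trans (opnorm_ub A w) _.
by apply: ler_wpM2r => //; apply: enorm_ge0.
Qed.

Lemma size_mu_letter m (mu : 'I_m -> word m) o :
  (size (mu_word mu (letter o)) <= \sum_(c : 'I_m) size (mu c))%N.
Proof.
case: o => [c|] //=; rewrite /mu_word /= cats0 (bigD1 c) //=.
exact: leq_addr.
Qed.

Definition rv m (D : 'rV[int]_m) : 'rV[R]_m := map_mx (fun z : int => z%:~R : R) D.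

Lemma cbound m (w1 w2 : word m) K : (size w1 <= K)%N -> (size w2 <= K)%N ->
  nsq (rv (parikh w1 - parikh w2)) <= m%:R * (K%:R)^+2.
Proof.
move=> h1 h2; rewrite /nsq.
apply: le_trans (_ : \sum_(j < m) (K%:R : R)^+2 <= _).
  apply: ler_sum => j _; rewrite /rv /parikh !mxE intrB.
  have a1 : (count_mem j w1 <= K)%N by apply: leq_trans (count_size _ _) h1.
  have a2 : (count_mem j w2 <= K)%N by apply: leq_trans (count_size _ _) h2.
  have b1 : ((count_mem j w1)%:R <= K%:R :> R) by rewrite ler_nat.
  have b2 : ((count_mem j w2)%:R <= K%:R :> R) by rewrite ler_nat.
  have c1 : (0 <= (count_mem j w1)%:R :> R) by [].
  have c2 : (0 <= (count_mem j w2)%:R :> R) by [].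
  change (((count_mem j w1)%:R - (count_mem j w2)%:R : R) ^+ 2 <= K%:R ^+ 2).
  nra.
by rewrite sumr_const card_ord mulr_natl.
Qed.

Lemma sz_aux T (u v w : seq T) L : (size (u ++ v ++ w) <= L)%N -> (size u + size w <= L)%N.
Proof. rewrite !size_cat; lia. Qed.

Lemma sum2 a b c d L : (a + b <= L)%N -> (c + d <= L)%N -> (b + c <= L + L)%N.
Proof. lia. Qed.

Lemma idx_aux i k : (i < k.-1)%N -> [/\ (i < k.+1)%N, (i.+1 < k.+1)%N & (i.+2 < k.+1)%N].
Proof. move=> h; split; lia. Qed.

Lemma sq_abs (z : int) (N : nat) : (z * z < N%:Z)%R -> (absz z <= N)%N.
Proof. move=> h; nia. Qed.

Theorem lemma4 (m : nat) (hm : (0 < m)%N) (mu : 'I_m -> word m)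
  (x : word m) (hx : x != [::])
  (hmu1 : mu (Ordinal hm) = Ordinal hm :: x)
  (hlen : forall a : 'I_m, (1 < size (mu a))%N)
  (hdet : \det (freq_mx mu) != 0)
  (hnorm : opnorm (invmx (map_mx (fun z : int => z%:~R : R) (freq_mx mu))) < 1)
  (k : nat) (hk : (0 < k)%N) :
  exists s : seq (template m k),
    forall t : template m k, ancestor mu t (Tk m k) -> t \in s.
Proof.
set Mz := freq_mx mu in hdet hnorm *.
set Mr := map_mx (fun z : int => z%:~R : R) Mz in hnorm.
have Mu : Mr \in unitmx by rewrite unitmxE (det_map_mx intr) unitfE intr_eq0.
set Ai := invmx Mr in hnorm.
set r := Num.max (opnorm Ai) 0.
have r0 : 0 <= r by rewrite le_max lexx orbT.
have r1 : r < 1 by rewrite gt_max hnorm ltr01.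
have hr : opnorm Ai <= r by rewrite le_max lexx.
set s := r ^+ 2.
have s0 : 0 <= s by apply: sqr_ge0.
have s1 : s < 1 by rewrite /s expr2; nra.
set L := (\sum_(c : 'I_m) size (mu c))%N.
set C2 : R := m%:R * ((L + L)%N%:R)^+2.
have C20 : 0 <= C2 by rewrite /C2 mulr_ge0 ?sqr_ge0 ?ler0n.
set p := (1 - s) / (1 + s).
set q := (1 + s) / (1 - s).
have hsp : 0 < 1 + s by lra.
have hsm : 0 < 1 - s by lra.
have p0 : 0 < p by apply: divr_gt0.
have q0 : 0 < q by apply: divr_gt0.
have pq : p * q = 1.
  rewrite /p /q; field; apply/andP; split; rewrite lt0r_neq0 //.
set B := 2 * s * (1 + s) * C2 / (1 - s) ^+ 2.
have B0 : 0 <= B.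
  have h2 : 0 <= 2 * s by lra.
  have h3 : 0 <= 2 * s * (1 + s) by apply: mulr_ge0 => //; lra.
  have h4 : 0 <= 2 * s * (1 + s) * C2 by apply: mulr_ge0.
  by apply: divr_ge0 => //; apply: sqr_ge0.
have BE : s * ((1 + p) * B + (1 + q) * C2) = B.
  rewrite /B /p /q; field; apply/andP; split; rewrite lt0r_neq0 //.
have step : forall D d c : 'rV[int]_m, c + D *m Mz = d ->
    nsq (rv c) <= C2 -> nsq (rv d) <= B -> nsq (rv D) <= B.
  move=> D d c hD hc hd.
  have e : rv D = (rv d - rv c) *m Ai.
    have e1 : rv D *m Mr = rv d - rv c.
      by rewrite /rv -hD map_mxD addrC addKr map_mxM.
    by rewrite -e1 /Ai mulmxK.
  rewrite e; apply: le_trans (contract hr r0 _) _.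
  rewrite -/s -BE; apply: ler_wpM2l => //.
  apply: le_trans (nsq_sub _ _ p0 pq) _.
  by apply: lerD; apply: ler_wpM2l => //; lra.
pose Inv (t : template m k) := forall i, (i < k.-1)%N -> nsq (rv (nth 0 t.2 i)) <= B.
have invP : forall t2 t1, parent mu t2 t1 -> Inv t1 -> Inv t2.
  move=> [A0 D0] [a0 d0] [a' [a'' [h1 h2]]] hinv i hi /=.
  have sz : forall j, (j < k.+1)%N -> (size (a' j) + size (a'' j) <= L)%N.
    move=> j hj; have := size_mu_letter mu (nth None A0 j).
    rewrite h1 //; exact: sz_aux.
  have [i0 i1 i2] := idx_aux hi.
  apply: (step _ (nth 0 d0 i) _ (h2 i hi)); last exact: (hinv i hi).
  apply: cbound; rewrite size_cat.
    exact: sum2 (sz _ i1) (sz _ i2).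
  exact: sum2 (sz _ i0) (sz _ i1).
have invA : forall t2 t1, ancestor mu t2 t1 -> Inv t1 -> Inv t2.
  move=> t2 t1; elim => [? ? /invP //|? ? ? _ IH1 _ IH2 h]; exact: IH1 (IH2 h).
have invT : Inv (Tk m k).
  move=> i hi /=; rewrite (_ : nth 0 _ i = 0).
    rewrite /nsq big1 // => j _; rewrite !mxE; by rewrite expr0n.
  have := tnth_mktuple (fun _ : 'I_(k.-1) => 0 : 'rV[int]_m) (Ordinal hi).
  by rewrite (tnth_nth 0) /=.
have [sq hsq] := fin_bounded m k (Num.Def.archi_bound B).
exists sq => t ht; apply: hsq => i hi j.
have := coord_le (rv (nth 0 t.2 i)) j.
move/le_trans/(_ (invA _ _ ht invT i hi)) => hb.
have := archi_boundP B0; move: (Num.Def.archi_bound B) => N hN.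
have : (((nth 0 t.2 i) 0 j) * ((nth 0 t.2 i) 0 j) < N%:Z)%R.
  rewrite -(ltr_int R) intrM -expr2; apply: le_lt_trans hN.
  by move: hb; rewrite /rv mxE.
exact: sq_abs.
Qed.
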